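(* Let $(H_1,+_1,\circ_1)$ and $(H_2,+_2,\circ_2)$ be commutative multiplicative hyperrings with identity. Let $P_1$ be a weakly sdf-absorbing strong $\mathcal{C}$-hyperideal of $H_1$ that is not an sdf-absorbing hyperideal, and let $P_2$ be a weakly sdf-absorbing strong $\mathcal{C}$-hyperideal of $H_2$ that is not an sdf-absorbing hyperideal. Then the following are equivalent: (i) $P_1\times P_2$ is a weakly sdf-absorbing hyperideal of $H_1\times H_2$ but is not an sdf-absorbing hyperideal; (ii) $P_1\times P_2$ is a weakly sdf-absorbing hyperideal of $H_1\times H_2$; (iii) if $x^2-y^2\subseteq P_1$ for $x,y\in H_1$, then $0\in x^2-y^2$, and if $u^2-v^2\subseteq P_2$ for $u,v\in H_2$, then $0\in u^2-v^2$; (iv) if $a^2-b^2\subseteq P_1\times P_2$ for $(0,0)\neq a,b\in H_1\times H_2$, then $(0,0)\in a^2-b^2$.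
   Context: A commutative multiplicative hyperring $(H,+,\circ)$ consists of an abelian group $(H,+)$ and an associative, commutative hyperoperation $\circ: H\times H\to P^*(H)$ with $x\circ(y+z)\subseteq x\circ y+x\circ z$ and $x\circ(-y)=-(x\circ y)=(-x)\circ y$. For subsets $A,B$, $A\circ B=\bigcup_{a\in A,b\in B}a\circ b$, $A\pm B=\{a\pm b\}$; $x^2=x\circ x$. Identity: $x\in x\circ 1$ for all $x$. $H_1\times H_2$ is the hyperring with $(x_1,x_2)+(y_1,y_2)=(x_1+_1y_1,x_2+_2y_2)$ and $(x_1,x_2)\circ(y_1,y_2)=\{(a,b): a\in x_1\circ_1y_1, b\in x_2\circ_2y_2\}$. A hyperideal is a nonempty $P$ with $x-y\in P$ and $r\circ x\subseteq P$ for $x,y\in P$, $r\in H$. Let $\mathcal{C}=\{c_1\circ\cdots\circ c_n: c_i\in H\}$ and $\mathfrak{C}=\{\sum_{i=1}^m C_i: C_i\in\mathcal{C}\}$; $P$ is a strong $\mathcal{C}$-hyperideal if for every $D\in\mathfrak{C}$, $D\cap P\neq\varnothing$ implies $D\subseteq P$. A proper hyperideal $P$ is sdf-absorbing if whenever $x,y$ are nonzero and $x^2-y^2\subseteq P$, then $x-y\in P$ or $x+y\in P$; it is weakly sdf-absorbing if whenever $x,y$ are nonzero and $0\notin x^2-y^2\subseteq P$, then $x-y\in P$ or $x+y\in P$. *)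

(* Defs.v *)
From mathcomp Require Import all_boot all_algebra.
Set Implicit Arguments. Unset Strict Implicit. Unset Printing Implicit Defensive.
Import GRing.Theory.
Local Open Scope ring_scope.

(* A hyperoperation on H is given by its graph: [hm x y z] means z \in x o y. *)
Definition hset (H : Type) := H -> Prop.
Definition hyperop (H : Type) := H -> H -> hset H.

Section Hyper.
Variable H : zmodType.
Variable hm : hyperop H.

Definition hsing (x : H) : hset H := fun z => z = x.
Definition hsubset (A B : hset H) : Prop := forall z, A z -> B z.
Definition hmulS (A B : hset H) : hset H :=
  fun z => exists a b, [/\ A a, B b & hm a b z].
Definition haddS (A B : hset H) : hset H :=
  fun z => exists a b, [/\ A a, B b & z = a + b].
Definition hsubS (A B : hset H) : hset H :=
  fun z => exists a b, [/\ A a, B b & z = a - b].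
Definition hsq (x : H) : hset H := hm x x.

Definition comMHyperringId : Prop :=
  (forall x y, exists z, hm x y z) /\ 
      (forall x y z w, hmulS (hmulS (hsing x) (hsing y)) (hsing z) w <->
                       hmulS (hsing x) (hmulS (hsing y) (hsing z)) w) /\
      (forall x y z, hm x y z <-> hm y x z) /\
      (forall x y z w, hm x (y + z) w -> haddS (hm x y) (hm x z) w) /\
      (forall x y w, hm x (- y) w <-> hm x y (- w)) /\
      (forall x y w, hm (- x) y w <-> hm x y (- w)) /\
      (exists one : H, forall x, hm x one x).

Definition hyperideal (P : hset H) : Prop :=
  [/\ exists x, P x,
      (forall x y, P x -> P y -> P (x - y))
    & (forall r x z, P x -> hm r x z -> P z)].

Definition proper_hyperideal (P : hset H) : Prop :=
  hyperideal P /\ exists x, ~ P x.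

(* c_1 o c_2 o ... o c_n, an element of the family C *)
Definition Cprod (c : H) (cs : seq H) : hset H :=
  foldl (fun A d => hmulS A (hsing d)) (hsing c) cs.
(* C_1 + ... + C_m with C_i in C, an element of the family frak C *)
Definition Csum (t : H * seq H) (ts : seq (H * seq H)) : hset H :=
  foldl (fun A u => haddS A (Cprod u.1 u.2)) (Cprod t.1 t.2) ts.

Definition strongC (P : hset H) : Prop :=
  forall t ts, (exists z, Csum t ts z /\ P z) -> hsubset (Csum t ts) P.

Definition sdf_absorbing (P : hset H) : Prop :=
  proper_hyperideal P /\
  forall x y, x != 0 -> y != 0 -> hsubset (hsubS (hsq x) (hsq y)) P ->
    P (x - y) \/ P (x + y).

Definition weakly_sdf_absorbing (P : hset H) : Prop :=
  proper_hyperideal P /\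
  forall x y, x != 0 -> y != 0 -> ~ hsubS (hsq x) (hsq y) 0 ->
    hsubset (hsubS (hsq x) (hsq y)) P -> P (x - y) \/ P (x + y).

End Hyper.

Definition prod_hyperop (H1 H2 : zmodType) (hm1 : hyperop H1) (hm2 : hyperop H2)
  : hyperop (H1 * H2) :=
  fun x y z => hm1 x.1 y.1 z.1 /\ hm2 x.2 y.2 z.2.

Definition prod_set (H1 H2 : Type) (P1 : hset H1) (P2 : hset H2) : hset (H1 * H2) :=
  fun z => P1 z.1 /\ P2 z.2.

(* Main.v *)
Require Import Defs.
From mathcomp Require Import all_boot all_algebra.
From Stdlib Require Import Classical.
Set Implicit Arguments.
Local Open Scope ring_scope.

Lemma not_sdf_wit (H : zmodType) (hm : hyperop H) (P : hset H) :
  weakly_sdf_absorbing hm P -> ~ sdf_absorbing hm P ->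
  exists x y : H, [/\ x != 0, y != 0, hsubset (hsubS (hsq hm x) (hsq hm y)) P,
     ~ P (x - y) & ~ P (x + y)].
Proof.
move=> [pr _] ns; apply: NNPP => hne; apply: ns; split=> // x y xn yn sub.
apply: NNPP => h; apply: hne; exists x, y; split=> //.
- by move=> p; apply: h; left.
- by move=> p; apply: h; right.
Qed.

Lemma prod_sub (H1 H2 : zmodType) (hm1 : hyperop H1) (hm2 : hyperop H2)
  (a b z : H1 * H2) :
  hsubS (hsq (prod_hyperop hm1 hm2) a) (hsq (prod_hyperop hm1 hm2) b) z <->
  hsubS (hsq hm1 a.1) (hsq hm1 b.1) z.1 /\ hsubS (hsq hm2 a.2) (hsq hm2 b.2) z.2.
Proof.
split.
- move=> [a' [b' [[ha1 ha2] [hb1 hb2] ->]]]; split.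
  + by exists a'.1, b'.1; split.
  + by exists a'.2, b'.2; split.
- move=> [[a1 [b1 [ha1 hb1 e1]]] [a2 [b2 [ha2 hb2 e2]]]].
  exists (a1, a2), (b1, b2); split; [by split|by split|].
  by case: z e1 e2 => z1 z2 /= -> ->.
Qed.

Lemma nz1 (H1 H2 : zmodType) (x : H1) (u : H2) : x != 0 -> (x, u) != 0.
Proof. by move=> /eqP xn; apply/eqP => h; apply: xn; have := congr1 fst h. Qed.
Lemma nz2 (H1 H2 : zmodType) (x : H1) (u : H2) : u != 0 -> (x, u) != 0.
Proof. by move=> /eqP xn; apply/eqP => h; apply: xn; have := congr1 snd h. Qed.

Theorem mainTheorem19 (H1 H2 : zmodType) (hm1 : hyperop H1) (hm2 : hyperop H2)
  (P1 : hset H1) (P2 : hset H2) :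
  comMHyperringId hm1 -> comMHyperringId hm2 ->
  weakly_sdf_absorbing hm1 P1 -> strongC hm1 P1 -> ~ sdf_absorbing hm1 P1 ->
  weakly_sdf_absorbing hm2 P2 -> strongC hm2 P2 -> ~ sdf_absorbing hm2 P2 ->
  let hm := prod_hyperop hm1 hm2 in
  let P := prod_set P1 P2 in
  let i := weakly_sdf_absorbing hm P /\ ~ sdf_absorbing hm P in
  let ii := weakly_sdf_absorbing hm P in
  let iii := (forall x y : H1, hsubset (hsubS (hsq hm1 x) (hsq hm1 y)) P1 ->
                hsubS (hsq hm1 x) (hsq hm1 y) 0) /\
             (forall u v : H2, hsubset (hsubS (hsq hm2 u) (hsq hm2 v)) P2 ->
                hsubS (hsq hm2 u) (hsq hm2 v) 0) in
  let iv := forall a b : H1 * H2, a != 0 -> b != 0 ->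
              hsubset (hsubS (hsq hm a) (hsq hm b)) P ->
              hsubS (hsq hm a) (hsq hm b) 0 in
  (i <-> ii) /\ (ii <-> iii) /\ (iii <-> iv).
Proof.
move=> R1 R2 W1 S1 N1 W2 S2 N2 hm P i ii iii iv.
have [[[[p1 hp1] sub1 abs1] [q1 hq1]] _] := W1.
have [[[[p2 hp2] sub2 abs2] [q2 hq2]] _] := W2.
have [ne1 _] := R1. have [ne2 _] := R2.
have P10 : P1 0 by rewrite -(GRing.subrr p1); apply: sub1.
have P20 : P2 0 by rewrite -(GRing.subrr p2); apply: sub2.
have Pid : proper_hyperideal hm P.
  split; last by exists (q1, 0) => -[].
  split.
  - by exists (p1, p2).
  - by move=> x y [x1 x2] [y1 y2]; split; [apply: sub1|apply: sub2].
  - move=> r x z [x1 x2] [h1 h2]; split; [exact: abs1 h1|exact: abs2 h2].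
have nesub1 : forall x y : H1, exists z, hsubS (hsq hm1 x) (hsq hm1 y) z.
  move=> x y; have [a ha] := ne1 x x; have [b hb] := ne1 y y.
  by exists (a - b), a, b.
have nesub2 : forall x y : H2, exists z, hsubS (hsq hm2 x) (hsq hm2 y) z.
  move=> x y; have [a ha] := ne2 x x; have [b hb] := ne2 y y.
  by exists (a - b), a, b.
have sq00_2 : hsubset (hsubS (hsq hm2 0) (hsq hm2 0)) P2.
  move=> z [a [b [ha hb ->]]]; apply: sub2; [exact: abs2 ha|exact: abs2 hb].
have ii_i : ii -> i.
  move=> Wii; split=> // ns; have [_ Hs] := ns.
  have [x [y [xn yn sb nm np]]] := not_sdf_wit W1 N1.
  have := Hs (x, 0) (y, 0) (@nz1 _ _ _ _ xn) (@nz1 _ _ _ _ yn).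
  case.
  - move=> z /prod_sub [z1 z2]; split; [exact: sb|exact: sq00_2].
  - by case.
  - by case.
have iv_ii : iv -> ii.
  move=> Hiv; split=> // a b an bn n0 sb; exfalso; apply: n0; exact: Hiv.
have iii_iv : iii -> iv.
  move=> [H3 H3'] a b an bn sb; apply/prod_sub; split.
  - apply: H3 => z1 hz1; have [z2 hz2] := nesub2 a.2 b.2.
    by have [] := sb (z1, z2) (proj2 (@prod_sub _ _ hm1 hm2 a b (z1, z2)) (conj hz1 hz2)).
  - apply: H3' => z2 hz2; have [z1 hz1] := nesub1 a.1 b.1.
    by have [] := sb (z1, z2) (proj2 (@prod_sub _ _ hm1 hm2 a b (z1, z2)) (conj hz1 hz2)).
have ii_iii : ii -> iii.
  move=> [_ Hw]; split.
  - move=> x y sb; apply: NNPP => n0.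
    have [u [v [un vn sbu nm np]]] := not_sdf_wit W2 N2.
    have := Hw (x, u) (y, v) (@nz2 _ _ _ _ un) (@nz2 _ _ _ _ vn).
    case.
    + by move=> /prod_sub [h1 _]; apply: n0.
    + by move=> z /prod_sub [z1 z2]; split; [exact: sb|exact: sbu].
    + by case.
    + by case.
  - move=> u v sb; apply: NNPP => n0.
    have [x [y [xn yn sbx nm np]]] := not_sdf_wit W1 N1.
    have := Hw (x, u) (y, v) (@nz1 _ _ _ _ xn) (@nz1 _ _ _ _ yn).
    case.
    + by move=> /prod_sub [_ h2]; apply: n0.
    + by move=> z /prod_sub [z1 z2]; split; [exact: sbx|exact: sb].
    + by case.
    + by case.
split; first by split; [case|exact: ii_i].
split; split.
- exact: ii_iii.
- by move=> h; apply: iv_ii; apply: iii_iv.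
- exact: iii_iv.
- by move=> h; apply: ii_iii; apply: iv_ii.
Qed.
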